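(* There exists a constant $C$ (independent of $N$, $m$, $n$) such that for the discrete reproduction–exchange Markov chain $(x^n)$ described in the context and any integers $0\le m<n$, $$\mathbb{E}\big(|x^n-x^m|^4\big)\le C\frac{|n-m|^2}{N^2},$$ where $|\cdot|$ is the Euclidean norm on $\mathbb{R}^2$.
   Context: Two patches have hosting capacities $N_1=N$ and $N_2=dN$, with $d=N_2/N_1\in(0,1]$ fixed; $\kappa>0$ fixed and $\kappa/N\le 1$. Let $M=\begin{pmatrix} d & -d\\ -1 & 1\end{pmatrix}$ and $A=\mathrm{Id}-\frac{\kappa}{N}M$. For a function $g$ on $\mathcal D=[0,1]^2$ define $$B_N(g)(x)=\sum_{j_1=0}^{N_1}\sum_{j_2=0}^{N_2}\binom{N_1}{j_1}\binom{N_2}{j_2}x_1^{j_1}(1-x_1)^{N_1-j_1}x_2^{j_2}(1-x_2)^{N_2-j_2}\,g\!\left(\tfrac{j_1}{N_1},\tfrac{j_2}{N_2}\right).$$ $(x^n)_{n\ge0}$ is the Markov chain in $\mathcal D$ with transition kernel $\mathbb{E}(f(x^{n+1})\mid x^n=x)=B_N(f\circ A)(x)$ for all functions $f$ on $\mathcal D$. *)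

(* Defs.v *)
From mathcomp Require Import all_boot all_order all_algebra.
From mathcomp Require Import reals.
Set Implicit Arguments. Unset Strict Implicit. Unset Printing Implicit Defensive.
Import Order.TTheory GRing.Theory Num.Theory.
Local Open Scope ring_scope.

Section Defs.
Variable R : realType.

(* The linear map A = Id - (kappa/N1) M, M = [[d, -d], [-1, 1]], d = N2/N1. *)
Definition Amap (N1 N2 : nat) (kappa : R) (x : R * R) : R * R :=
  let d := N2%:R / N1%:R in
  let h := kappa / N1%:R in
  (x.1 - h * (d * x.1 - d * x.2), x.2 - h * (- x.1 + x.2)).

Definition bernstein2 (N1 N2 : nat) (g : R * R -> R) (x : R * R) : R :=
  \sum_(j1 < N1.+1) \sum_(j2 < N2.+1)
    ('C(N1, j1)%:R * 'C(N2, j2)%:R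
     * x.1 ^+ j1 * (1 - x.1) ^+ (N1 - j1)
     * x.2 ^+ j2 * (1 - x.2) ^+ (N2 - j2))
    * g ((j1%:R / N1%:R), (j2%:R / N2%:R)).

(* Transition operator of the chain: (P f)(x) = E(f(x^{n+1}) | x^n = x). *)
Definition transition (N1 N2 : nat) (kappa : R) (f : R * R -> R) : R * R -> R :=
  bernstein2 N1 N2 (fun y => f (Amap N1 N2 kappa y)).

Definition transition_iter (N1 N2 : nat) (kappa : R) (k : nat)
  (f : R * R -> R) : R * R -> R :=
  iter k (transition N1 N2 kappa) f.

Definition eucl (x : R * R) : R := Num.sqrt (x.1 ^+ 2 + x.2 ^+ 2).

Definition in_D (x : R * R) : Prop := 0 <= x.1 <= 1 /\ 0 <= x.2 <= 1.

(* E_{x0}( |x^n - x^m|^4 ) for the chain started at x^0 = x0, m <= n,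
   computed by the Markov property:
   E_{x0}[ g(x^m, x^n) ] = P^m ( y |-> P^(n-m) (z |-> g(y,z)) (y) ) (x0). *)
Definition fourth_moment_incr (N1 N2 : nat) (kappa : R) (m n : nat)
  (x0 : R * R) : R :=
  transition_iter N1 N2 kappa m
    (fun y => transition_iter N1 N2 kappa (n - m)
                (fun z => eucl (z.1 - y.1, z.2 - y.2) ^+ 4) y) x0.

End Defs.

(* Main.v *)
Require Import Defs.
From mathcomp Require Import all_boot all_order all_algebra.
From mathcomp Require Import reals.
Import Order.TTheory GRing.Theory Num.Theory.
Local Open Scope ring_scope.
From mathcomp Require Import ring lra.
Set Implicit Arguments. Unset Strict Implicit. Unset Printing Implicit Defensive.


Section B1.
Variable R : realType.
Implicit Types (x : R) (g : nat -> R).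

Definition bw (N : nat) (x : R) (j : nat) : R := 'C(N, j)%:R * x ^+ j * (1 - x) ^+ (N - j).

Definition S (N : nat) x g := \sum_(j < N.+1) bw N x j * g j.

Lemma S_ext N x g1 g2 : (forall j, (j <= N)%N -> g1 j = g2 j) -> S N x g1 = S N x g2.
Proof. move=> H; apply: eq_bigr => j _; rewrite H //; exact: ltn_ord j. Qed.

Lemma S_rec N x g :
  S N.+1 x g = (1 - x) * S N x g + x * S N x (fun j => g j.+1).
Proof.
have E1 : \sum_(i < N.+1) bw N.+1 x i.+1 * g i.+1 =
   x * S N x (fun j => g j.+1) +
   \sum_(i < N.+1) 'C(N, i.+1)%:R * x ^+ i.+1 * (1 - x) ^+ (N - i) * g i.+1.
  rewrite /S mulr_sumr -big_split; apply: eq_bigr => i _ /=.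
  rewrite /bw binS subSS natrD exprS; ring.
have E2 : \sum_(i < N.+1) 'C(N, i.+1)%:R * x ^+ i.+1 * (1 - x) ^+ (N - i) * g i.+1
   = (1 - x) * \sum_(i < N) (bw N x i.+1 * g i.+1).
  rewrite mulr_sumr big_ord_recr /= bin_small // mul0r !mul0r addr0.
  apply: eq_bigr => i _; rewrite /bw.
  have -> : (N - i = (N - i.+1).+1)%N by rewrite subnSK.
  rewrite [(1 - x) ^+ _.+1]exprS; ring.
rewrite /S big_ord_recl /= E1 E2 [in RHS]big_ord_recl /=.
rewrite (eq_bigr (fun i : 'I_N => bw N x i.+1 * g i.+1)); last first.
  by [].
rewrite /bw !bin0 !subn0 !expr0 /= exprS; rewrite /S /bw; ring.
Qed.

Definition U N x (f : R -> R) := S N x (fun j => f (j%:R - N%:R * x)).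

Lemma U_rec N x f : U N.+1 x f = (1 - x) * U N x (fun e => f (e - x)) + x * U N x (fun e => f (e + (1 - x))).
Proof.
rewrite /U S_rec; congr (_ * _ + _ * _); apply: S_ext => j _; congr f.
  rewrite -[N.+1]addn1 natrD; ring.
rewrite -[N.+1]addn1 -[j.+1]addn1 !natrD; ring.
Qed.

Lemma U_lin N x a0 a1 a2 a3 a4 :
  U N x (fun e => a0 + a1 * e + a2 * e ^+ 2 + a3 * e ^+ 3 + a4 * e ^+ 4) =
  a0 * U N x (fun _ => 1) + a1 * U N x id + a2 * U N x (fun e => e ^+ 2)
  + a3 * U N x (fun e => e ^+ 3) + a4 * U N x (fun e => e ^+ 4).
Proof.
rewrite /U /S !mulr_sumr -!big_split; apply: eq_bigr => j _ /=; ring.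
Qed.

Lemma U_eq N x f1 f2 : (forall e, f1 e = f2 e) -> U N x f1 = U N x f2.
Proof. by move=> H; apply: S_ext => j _; rewrite H. Qed.

Notation Uk N x k := (U N x (fun e => e ^+ k)).

Lemma U_pow N x (a0 a1 a2 a3 a4 : R) (f : R -> R) :
  (forall e, f e = a0 + a1 * e + a2 * e ^+ 2 + a3 * e ^+ 3 + a4 * e ^+ 4) ->
  U N x f = a0 * U N x (fun _ => 1) + a1 * U N x id + a2 * Uk N x 2
     + a3 * Uk N x 3 + a4 * Uk N x 4.
Proof. by move=> H; rewrite (U_eq _ _ H) U_lin. Qed.

Lemma U0 N x : U N x (fun _ => 1) = 1.
Proof.
elim: N => [|N IH]; first by rewrite /U /S big_ord1 /bw /= mulr1 !mul1r.
rewrite U_rec IH; ring.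
Qed.

Lemma U1 N x : U N x id = 0.
Proof.
elim: N => [|N IH]; first by rewrite /U /S big_ord1 /bw /= mul0r subr0 mulr0.
rewrite U_rec.
rewrite (@U_pow _ _ (- x) 1 0 0 0 (fun e => e - x)); last by move=> e; ring.
rewrite (@U_pow _ _ (1 - x) 1 0 0 0 (fun e => e + (1 - x))); last by move=> e; ring.
rewrite IH U0; ring.
Qed.

Lemma Ushift N x c :
  [/\ U N x (fun e => (e + c) ^+ 2) = c ^+ 2 * U N x (fun _ => 1) + (2 * c) * U N x id + 1 * Uk N x 2 + 0 * Uk N x 3 + 0 * Uk N x 4,
      U N x (fun e => (e + c) ^+ 3) = c ^+ 3 * U N x (fun _ => 1) + (3 * c ^+ 2) * U N x id + (3 * c) * Uk N x 2 + 1 * Uk N x 3 + 0 * Uk N x 4 &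
      U N x (fun e => (e + c) ^+ 4) = c ^+ 4 * U N x (fun _ => 1) + (4 * c ^+ 3) * U N x id + (6 * c ^+ 2) * Uk N x 2 + (4 * c) * Uk N x 3 + 1 * Uk N x 4].
Proof. by split; apply: U_pow => e; ring. Qed.

Lemma U2 N x : Uk N x 2 = N%:R * x * (1 - x).
Proof.
elim: N => [|N IH]; first by rewrite /U /S big_ord1 /bw /= mul0r subr0 expr0n /= mulr0 !mul0r.
rewrite U_rec.
have [-> _ _] := Ushift N x (- x).
have [-> _ _] := Ushift N x (1 - x).
rewrite IH U0 U1 -[N.+1]addn1 natrD; ring.
Qed.

Lemma U3 N x : Uk N x 3 = N%:R * x * (1 - x) * (1 - 2 * x).
Proof.
elim: N => [|N IH]; first by rewrite /U /S big_ord1 /bw /= mul0r subr0 expr0n /= mulr0 !mul0r.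
rewrite U_rec.
have [_ -> _] := Ushift N x (- x).
have [_ -> _] := Ushift N x (1 - x).
rewrite IH U0 U1 U2 -[N.+1]addn1 natrD; ring.
Qed.

Lemma U4 N x : Uk N x 4 = 3 * N%:R ^+ 2 * (x * (1 - x)) ^+ 2 + N%:R * (x * (1 - x)) * (1 - 6 * (x * (1 - x))).
Proof.
elim: N => [|N IH]; first by rewrite /U /S big_ord1 /bw /= mul0r subr0 expr0n /= mulr0 !mul0r expr0n /= !mulr0 !mul0r addr0.
rewrite U_rec.
have [_ _ ->] := Ushift N x (- x).
have [_ _ ->] := Ushift N x (1 - x).
rewrite IH U0 U1 U2 U3 -[N.+1]addn1 natrD; ring.
Qed.

Lemma bw_ge0 N x j : 0 <= x <= 1 -> 0 <= bw N x j.
Proof.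
move=> /andP[h0 h1]; rewrite /bw; apply: mulr_ge0; [apply: mulr_ge0|].
- exact: ler0n.
- exact: exprn_ge0.
- by apply: exprn_ge0; rewrite subr_ge0.
Qed.

Lemma S1 N x : S N x (fun _ => 1) = 1.
Proof. exact: U0. Qed.

Lemma S_bound N x (b c e : R) : (0 < N)%N -> 0 <= x <= 1 -> 0 <= c -> 0 <= e ->
  S N x (fun j => b * (j%:R / N%:R - x) + c * (j%:R / N%:R - x) ^+ 2 + e * (j%:R / N%:R - x) ^+ 4)
  <= c / N%:R + e / N%:R ^+ 2.
Proof.
move=> hN /andP[h0 h1] hc he.
have hN' : (0 : R) < N%:R by rewrite ltr0n.
have hNn : (N%:R : R) != 0 by rewrite gt_eqF.
have -> : S N x (fun j => b * (j%:R / N%:R - x) + c * (j%:R / N%:R - x) ^+ 2 + e * (j%:R / N%:R - x) ^+ 4)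
  = U N x (fun t => 0 + (b / N%:R) * t + (c / N%:R ^+ 2) * t ^+ 2 + 0 * t ^+ 3 + (e / N%:R ^+ 4) * t ^+ 4).
  by apply: S_ext => j _; field.
rewrite U_lin U0 U1 U2 U4.
set p := x * (1 - x).
have hp0 : 0 <= p by rewrite /p; apply: mulr_ge0 => //; rewrite subr_ge0.
have hp1 : 4 * p <= 1 by rewrite /p; have := sqr_ge0 (2 * x - 1); nra.
have H2 : c / N%:R ^+ 2 * (N%:R * x * (1 - x)) <= c / N%:R.
  have -> : c / N%:R ^+ 2 * (N%:R * x * (1 - x)) = c / N%:R * p by rewrite /p; field.
  rewrite -[X in _ <= X]mulr1; apply: ler_wpM2l; last by lra.
  by apply: divr_ge0 => //; exact: ler0n.
have H4 : e / N%:R ^+ 4 * (3 * N%:R ^+ 2 * p ^+ 2 + N%:R * p * (1 - 6 * p)) <= e / N%:R ^+ 2.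
  have -> : e / N%:R ^+ 4 * (3 * N%:R ^+ 2 * p ^+ 2 + N%:R * p * (1 - 6 * p))
     = e / N%:R ^+ 2 * ((3 * N%:R ^+ 2 * p ^+ 2 + N%:R * p * (1 - 6 * p)) / N%:R ^+ 2) by field.
  rewrite -[X in _ <= X]mulr1; apply: ler_wpM2l.
    by apply: divr_ge0 => //; apply: exprn_ge0; exact: ler0n.
  rewrite ler_pdivrMr ?exprn_gt0 // mul1r.
  have hN1 : (1 : R) <= N%:R by rewrite ler1n.
  have a1 : p ^+ 2 <= 1 by nra.
  have a2 : N%:R * p * (1 - 6 * p) <= N%:R * p by nra.
  have a3 : N%:R * p <= N%:R ^+ 2 / 4 by nra.
  have b1 : 16 * p ^+ 2 <= 1 by nra.
  have hM : 0 <= (N%:R : R) ^+ 2 by apply: exprn_ge0; lra.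
  have a4 : 3 * N%:R ^+ 2 * p ^+ 2 <= 3 * N%:R ^+ 2 / 16.
    have := mulr_ge0 hM (_ : 0 <= 1 - 16 * p ^+ 2); nra.
  nra.
lra.
Qed.
End B1.


Section B2.
Variable R : realType.

Lemma bern_sep N1 N2 (g : R * R -> R) z : bernstein2 N1 N2 g z =
  \sum_(j1 < N1.+1) \sum_(j2 < N2.+1) bw N1 z.1 j1 * bw N2 z.2 j2 * g (j1%:R / N1%:R, j2%:R / N2%:R).
Proof. apply: eq_bigr => j1 _; apply: eq_bigr => j2 _; rewrite /bw; ring. Qed.

Lemma bern_sum_eq N1 N2 (z : R * R) (a : R) (f1 f2 : nat -> R) :
  \sum_(j1 < N1.+1) \sum_(j2 < N2.+1) bw N1 z.1 j1 * bw N2 z.2 j2 * (a + f1 j1 + f2 j2)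
  = a + S N1 z.1 f1 + S N2 z.2 f2.
Proof.
transitivity (\sum_(j1 < N1.+1) bw N1 z.1 j1 * ((a + f1 j1) * S N2 z.2 (fun _ => 1) + S N2 z.2 f2)).
  apply: eq_bigr => j1 _; rewrite /S !mulr_sumr -big_split /= mulr_sumr; apply: eq_bigr => j2 _; rewrite /=; ring.
rewrite S1.
transitivity ((a + S N2 z.2 f2) * S N1 z.1 (fun _ => 1) + S N1 z.1 f1).
  rewrite /S !mulr_sumr -big_split /=; apply: eq_bigr => j1 _; ring.
rewrite S1; ring.
Qed.

Lemma bern_le N1 N2 (g : R * R -> R) z (a : R) (f1 f2 : nat -> R) : in_D z ->
  (forall j1 j2 : nat, (j1 <= N1)%N -> (j2 <= N2)%N -> g (j1%:R / N1%:R, j2%:R / N2%:R) <= a + f1 j1 + f2 j2) ->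
  bernstein2 N1 N2 g z <= a + S N1 z.1 f1 + S N2 z.2 f2.
Proof.
move=> [hz1 hz2] H; rewrite bern_sep -bern_sum_eq.
apply: ler_sum => j1 _; apply: ler_sum => j2 _; apply: ler_wpM2l.
  by apply: mulr_ge0; apply: bw_ge0.
by apply: H; rewrite -ltnS ltn_ord.
Qed.

Lemma bern_const N1 N2 (c : R) z : bernstein2 N1 N2 (fun _ => c) z = c.
Proof.
rewrite bern_sep; transitivity (c + S N1 z.1 (fun _ => 0) + S N2 z.2 (fun _ => 0)).
  rewrite -bern_sum_eq; apply: eq_bigr => j1 _; apply: eq_bigr => j2 _; rewrite !addr0 //.
by rewrite /S !big1 ?addr0 // => j _; rewrite mulr0.
Qed.

Lemma bern_ext N1 N2 (f g : R * R -> R) z : (forall y, f y = g y) ->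
  bernstein2 N1 N2 f z = bernstein2 N1 N2 g z.
Proof. by move=> H; apply: eq_bigr => j1 _; apply: eq_bigr => j2 _; rewrite H. Qed.

Lemma bern_lin N1 N2 (a b : R) (f g : R * R -> R) z :
  bernstein2 N1 N2 (fun y => a * f y + b * g y) z = a * bernstein2 N1 N2 f z + b * bernstein2 N1 N2 g z.
Proof.
rewrite /bernstein2 !mulr_sumr -big_split /=; apply: eq_bigr => j1 _.
rewrite !mulr_sumr -big_split /=; apply: eq_bigr => j2 _; ring.
Qed.

Lemma bern_mono N1 N2 (f g : R * R -> R) z : in_D z ->
  (forall j1 j2 : nat, (j1 <= N1)%N -> (j2 <= N2)%N -> f (j1%:R / N1%:R, j2%:R / N2%:R) <= g (j1%:R / N1%:R, j2%:R / N2%:R)) ->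
  bernstein2 N1 N2 f z <= bernstein2 N1 N2 g z.
Proof.
move=> [hz1 hz2] H; rewrite !bern_sep.
apply: ler_sum => j1 _; apply: ler_sum => j2 _; apply: ler_wpM2l.
  by apply: mulr_ge0; apply: bw_ge0.
by apply: H; rewrite -ltnS ltn_ord.
Qed.

Section Iter.
Variables (N1 N2 : nat) (kappa : R).
Local Notation P := (transition N1 N2 kappa).

Lemma I_ext k (f g : R * R -> R) : (forall y, f y = g y) -> forall z, iter k P f z = iter k P g z.
Proof.
move=> H; elim: k => [|k IH] z /=; first exact: H.
by apply: bern_ext => y; rewrite IH.
Qed.

Lemma I_lin k (a b : R) (f g : R * R -> R) z :
  iter k P (fun y => a * f y + b * g y) z = a * iter k P f z + b * iter k P g z.
Proof.
elim: k z => [|k IH] z //=.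
rewrite /transition -bern_lin; apply: bern_ext => y; exact: IH.
Qed.

Lemma I_const k (c : R) z : iter k P (fun _ => c) z = c.
Proof.
elim: k z => [|k IH] z //=.
rewrite /transition (@bern_ext _ _ _ (fun _ => c)) ?bern_const // => y; exact: IH.
Qed.

Hypothesis HA : forall j1 j2 : nat, (j1 <= N1)%N -> (j2 <= N2)%N ->
  in_D (Amap N1 N2 kappa (j1%:R / N1%:R, j2%:R / N2%:R)).

Lemma I_mono k (f g : R * R -> R) : (forall y, in_D y -> f y <= g y) ->
  forall z, in_D z -> iter k P f z <= iter k P g z.
Proof.
move=> H; elim: k => [|k IH] z hz /=; first exact: H.
apply: bern_mono => // j1 j2 h1 h2; apply: IH; exact: HA.
Qed.
End Iter.
End B2.


Section PW.
Variable R : realType.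

Lemma sq_le_bound (x h : R) : 0 <= h -> x ^+ 2 <= h ^+ 2 -> x <= h.
Proof. move=> h0 H; nra. Qed.

Lemma prod_le (a e h : R) : 0 <= h -> a ^+ 2 <= 1 -> e ^+ 2 <= h ^+ 2 -> a * e <= h.
Proof.
move=> h0 ha he; apply: sq_le_bound => //.
rewrite exprMn; have := ler_pM (sqr_ge0 a) (sqr_ge0 e) ha he; lra.
Qed.

Lemma step1 (a1 a2 e1 e2 h : R) : 0 <= h -> h <= 1 ->
  a1 ^+ 2 <= 1 -> a2 ^+ 2 <= 1 -> e1 ^+ 2 <= h ^+ 2 -> e2 ^+ 2 <= h ^+ 2 ->
  let s := a1 ^+ 2 + a2 ^+ 2 in
  ((a1 + e1) ^+ 2 + (a2 + e2) ^+ 2) ^+ 2 <= s ^+ 2 + 20 * h * s + 20 * h ^+ 2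
  /\ (a1 + e1) ^+ 2 + (a2 + e2) ^+ 2 <= s + 6 * h.
Proof.
move=> h0 h1 ha1 ha2 he1 he2 s.
set r := e1 ^+ 2 + e2 ^+ 2.
set t := a1 * e1 + a2 * e2.
have hs0 : 0 <= s by rewrite /s; nra.
have hs2 : s <= 2 by rewrite /s; lra.
have hr0 : 0 <= r by rewrite /r; nra.
have hr2 : r <= 2 * h ^+ 2 by rewrite /r; lra.
have ht : t <= 2 * h by rewrite /t; have := prod_le h0 ha1 he1; have := prod_le h0 ha2 he2; lra.
have ht' : - t <= 2 * h.
  rewrite /t; have := prod_le (e := - e1) h0 ha1; have := prod_le (e := - e2) h0 ha2.
  rewrite !sqrrN => H2 H1; have := H1 he1; have := H2 he2; lra.
have hts : t ^+ 2 <= s * r.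
  rewrite /t /s /r; have := sqr_ge0 (a1 * e2 - a2 * e1); nra.
have hexp : (a1 + e1) ^+ 2 + (a2 + e2) ^+ 2 = s + 2 * t + r by rewrite /s /t /r; ring.
rewrite hexp; split; last by nra.
have E : (s + 2 * t + r) ^+ 2 = s ^+ 2 + 4 * s * t + 4 * t ^+ 2 + 2 * s * r + 4 * t * r + r ^+ 2 by ring.
rewrite E.
have i1 : s * t <= 2 * h * s by nra.
have i2 : s * r <= 2 * h * s.
  have : h ^+ 2 <= h by nra.
  nra.
have i3 : t * r <= 4 * h ^+ 2.
  have : t * r <= 2 * h * r by nra.
  have h3 : h ^+ 3 <= h ^+ 2.
    rewrite exprS; have := sqr_ge0 h => hh.
    by rewrite -[X in _ <= X]mul1r; apply: ler_wpM2r.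
  nra.
have i4 : r ^+ 2 <= 4 * h ^+ 2.
  have : r ^+ 2 <= 4 * h ^+ 4 by nra.
  have h4 : h ^+ 4 <= h ^+ 2.
    have hh : h ^+ 2 <= 1 by nra.
    have := sqr_ge0 h => hh'.
    rewrite (_ : 4 = 2 + 2)%N // exprD -[X in _ <= X]mul1r; apply: ler_wpM2r => //.
  nra.
nra.
Qed.


Lemma step2 (w1 w2 x1 x2 : R) :
  let W := w1 ^+ 2 + w2 ^+ 2 in
  let u := w1 * x1 + w2 * x2 in
  let v := x1 ^+ 2 + x2 ^+ 2 in
  (((w1 + x1) ^+ 2 + (w2 + x2) ^+ 2) = W + 2 * u + v) /\ (((w1 + x1) ^+ 2 + (w2 + x2) ^+ 2) ^+ 2 <= W ^+ 2 + 4 * W * u + 8 * W * v + 6 * (x1 ^+ 4 + x2 ^+ 4)).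
Proof.
move=> W u v.
have E : (w1 + x1) ^+ 2 + (w2 + x2) ^+ 2 = W + 2 * u + v by rewrite /W /u /v; ring.
rewrite E; split => //.
have cs : u ^+ 2 <= W * v by rewrite /u /W /v; have := sqr_ge0 (w1 * x2 - w2 * x1); nra.
have hv : v ^+ 2 <= 2 * (x1 ^+ 4 + x2 ^+ 4).
  rewrite /v; have := sqr_ge0 (x1 ^+ 2 - x2 ^+ 2).
  have -> : x1 ^+ 4 = (x1 ^+ 2) ^+ 2 by rewrite -exprM.
  have -> : x2 ^+ 4 = (x2 ^+ 2) ^+ 2 by rewrite -exprM.
  nra.
have uv : 4 * u * v <= 2 * u ^+ 2 + 2 * v ^+ 2 by have := sqr_ge0 (u - v); nra.
have E2 : (W + 2 * u + v) ^+ 2 = W ^+ 2 + 4 * u ^+ 2 + v ^+ 2 + 4 * W * u + 2 * W * v + 4 * u * v by ring.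
rewrite E2; nra.
Qed.

Lemma unit_sq (a b : R) : 0 <= a <= 1 -> 0 <= b <= 1 -> (a - b) ^+ 2 <= 1.
Proof. move=> /andP[? ?] /andP[? ?]; nra. Qed.

Lemma pw_main (Y1 Y2 y1 y2 z1 z2 h d : R) :
  0 <= Y1 <= 1 -> 0 <= Y2 <= 1 -> 0 <= y1 <= 1 -> 0 <= y2 <= 1 ->
  0 <= h -> h <= 1 -> 0 <= d -> d <= 1 ->
  let A1 := Y1 - h * (d * Y1 - d * Y2) in
  let A2 := Y2 - h * (- Y1 + Y2) in
  let W := (z1 - y1) ^+ 2 + (z2 - y2) ^+ 2 in
  ((A1 - y1) ^+ 2 + (A2 - y2) ^+ 2) ^+ 2 <=
    W ^+ 2 + 20 * h * W + 20 * h ^+ 2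
    + (((4 * W + 40 * h) * (z1 - y1)) * (Y1 - z1) + (8 * W + 20 * h) * (Y1 - z1) ^+ 2 + 6 * (Y1 - z1) ^+ 4)
    + (((4 * W + 40 * h) * (z2 - y2)) * (Y2 - z2) + (8 * W + 20 * h) * (Y2 - z2) ^+ 2 + 6 * (Y2 - z2) ^+ 4)
  /\ (A1 - y1) ^+ 2 + (A2 - y2) ^+ 2 <=
    W + 6 * h + ((2 * (z1 - y1)) * (Y1 - z1) + 1 * (Y1 - z1) ^+ 2 + 0 * (Y1 - z1) ^+ 4)
              + ((2 * (z2 - y2)) * (Y2 - z2) + 1 * (Y2 - z2) ^+ 2 + 0 * (Y2 - z2) ^+ 4).
Proof.
move=> hY1 hY2 hy1 hy2 h0 h1 d0 d1 A1 A2 W.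
have ha1 := unit_sq hY1 hy1.
have ha2 := unit_sq hY2 hy2.
have hd12 : (d * (Y1 - Y2)) ^+ 2 <= 1.
  have := unit_sq hY1 hY2; rewrite exprMn => H.
  have : d ^+ 2 <= 1 by nra.
  have := sqr_ge0 (Y1 - Y2); nra.
have he1 : (- (h * (d * (Y1 - Y2)))) ^+ 2 <= h ^+ 2.
  rewrite sqrrN exprMn -[X in _ <= X]mulr1; apply: ler_wpM2l => //; exact: sqr_ge0.
have he2 : (- (h * (Y2 - Y1))) ^+ 2 <= h ^+ 2.
  have := unit_sq hY2 hY1 => H.
  rewrite sqrrN exprMn -[X in _ <= X]mulr1; apply: ler_wpM2l => //; exact: sqr_ge0.
have [s1 s2] := step1 h0 h1 ha1 ha2 he1 he2.
have eA1 : A1 - y1 = (Y1 - y1) + - (h * (d * (Y1 - Y2))) by rewrite /A1; ring.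
have eA2 : A2 - y2 = (Y2 - y2) + - (h * (Y2 - Y1)) by rewrite /A2; ring.
rewrite eA1 eA2.
have [t1 t2] := step2 (z1 - y1) (z2 - y2) (Y1 - z1) (Y2 - z2).
have ex1 : z1 - y1 + (Y1 - z1) = Y1 - y1 by ring.
have ex2 : z2 - y2 + (Y2 - z2) = Y2 - y2 by ring.
rewrite ex1 ex2 in t1 t2.
rewrite -/W in t1 t2.
split.
  set s := (Y1 - y1) ^+ 2 + (Y2 - y2) ^+ 2 in s1 s2 t1 t2 *.
  rewrite t1 in s1; nra.
set s := (Y1 - y1) ^+ 2 + (Y2 - y2) ^+ 2 in s1 s2 t1 t2 *.
rewrite t1 in s2; lra.
Qed.
End PW.


Lemma eucl4 (R : realType) (a b : R) : eucl (a, b) ^+ 4 = (a ^+ 2 + b ^+ 2) ^+ 2.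
Proof.
rewrite /eucl /= (_ : 4 = 2 * 2)%N // exprM sqr_sqrtr //.
by apply: addr_ge0; apply: sqr_ge0.
Qed.

Lemma conv01 (R : realType) (a b t : R) : 0 <= a <= 1 -> 0 <= b <= 1 -> 0 <= t -> t <= 1 ->
  0 <= a - t * (a - b) <= 1.
Proof. move=> /andP[? ?] /andP[? ?] ? ?; apply/andP; split; nra. Qed.

Lemma grid01 (R : realType) (j N : nat) : (0 < N)%N -> (j <= N)%N -> 0 <= (j%:R / N%:R : R) <= 1.
Proof.
move=> hN hj; have hN' : (0 : R) < N%:R by rewrite ltr0n.
apply/andP; split; first by apply: divr_ge0; apply: ler0n.
by rewrite ler_pdivrMr // mul1r ler_nat.
Qed.

Unset Implicit Arguments.
Set Strict Implicit.

Theorem proposition3 (R : realType) (d kappa : R) :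
  0 < d -> d <= 1 -> 0 < kappa ->
  exists C : R,
    forall (N1 N2 : nat), (0 < N1)%N ->
      N2%:R = d * N1%:R ->
      kappa / N1%:R <= 1 ->
      forall (x0 : R * R), in_D x0 ->
      forall (m n : nat), (m < n)%N ->
        fourth_moment_incr N1 N2 kappa m n x0
          <= C * ((n - m)%:R ^+ 2) / (N1%:R ^+ 2).
Proof.
move=> hd0 hd1 hk.
set D' := 1 + 1 / d.
set c2 := 6 * kappa + D'.
set c4a := 20 * kappa + 8 * D'.
set c4b := 20 * kappa ^+ 2 + 20 * kappa * D' + 6 * (1 + 1 / d ^+ 2).
have hid : 0 <= 1 / d by apply: divr_ge0; lra.
have hD' : 0 <= D' by rewrite /D'; lra.
have hc2 : 0 <= c2 by rewrite /c2; lra.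
have hc4a : 0 <= c4a by rewrite /c4a; lra.
have hc4b : 0 <= c4b.
  rewrite /c4b; have : 0 <= 1 / d ^+ 2 by apply: divr_ge0; [lra| apply: sqr_ge0].
  have := mulr_ge0 (ltW hk) hD'; have := sqr_ge0 kappa; lra.
exists (c4a * c2 + c4b).
move=> N1 N2 hN hN2 hh x0 hx0 m n hmn.
have hNp : (0 : R) < N1%:R by rewrite ltr0n.
have hNn : (N1%:R : R) != 0 by rewrite gt_eqF.
have hdn : d != 0 by rewrite gt_eqF.
have hN2p : (0 < N2)%N by rewrite -(ltr0n R) hN2; apply: mulr_gt0.
set h := kappa / N1%:R.
have h0 : 0 <= h by rewrite /h; apply: divr_ge0; lra.
have hdd : N2%:R / N1%:R = d by rewrite hN2; field.
have hA : forall Y : R * R, Amap N1 N2 kappa Y = (Y.1 - h * (d * Y.1 - d * Y.2), Y.2 - h * (- Y.1 + Y.2)).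
  by move=> Y; rewrite /Amap /= hdd.
have HA : forall j1 j2 : nat, (j1 <= N1)%N -> (j2 <= N2)%N ->
  in_D (Amap N1 N2 kappa (j1%:R / N1%:R, j2%:R / N2%:R)).
  move=> j1 j2 h1 h2; rewrite hA /=.
  have g1 := grid01 R hN h1; have g2 := grid01 R hN2p h2.
  split.
    rewrite (_ : d * _ - d * _ = d * (j1%:R / N1%:R - j2%:R / N2%:R)); last by ring.
    rewrite mulrA; apply: conv01 => //.
      by apply: mulr_ge0; lra.
    by have := ler_pM h0 (ltW hd0) hh hd1; rewrite mul1r.
  rewrite (_ : - _ + _ = (j2%:R / N2%:R - j1%:R / N1%:R)); last by ring.
  by apply: conv01.
set P := transition N1 N2 kappa.
have hN2r : (0 : R) < N2%:R by rewrite ltr0n.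
have B2 : forall y z : R * R, in_D y -> in_D z ->
  P (fun u => (u.1 - y.1) ^+ 2 + (u.2 - y.2) ^+ 2) z <=
  ((z.1 - y.1) ^+ 2 + (z.2 - y.2) ^+ 2) + c2 / N1%:R.
  move=> [y1 y2] [z1 z2] [/= hy1 hy2] [/= hz1 hz2] /=.
  set W := (z1 - y1) ^+ 2 + (z2 - y2) ^+ 2.
  rewrite /P /transition.
  apply: le_trans.
    apply: (@bern_le _ N1 N2 _ (z1, z2) (W + 6 * h)
      (fun j => (2 * (z1 - y1)) * (j%:R / N1%:R - z1) + 1 * (j%:R / N1%:R - z1) ^+ 2 + 0 * (j%:R / N1%:R - z1) ^+ 4)
      (fun j => (2 * (z2 - y2)) * (j%:R / N2%:R - z2) + 1 * (j%:R / N2%:R - z2) ^+ 2 + 0 * (j%:R / N2%:R - z2) ^+ 4)).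
      by split.
    move=> j1 j2 h1 h2; rewrite hA /=.
    have g1 := grid01 R hN h1; have g2 := grid01 R hN2p h2.
    have [_ P2] := pw_main z1 z2 g1 g2 hy1 hy2 h0 hh (ltW hd0) hd1.
    exact: P2.
  have Sa := S_bound (2 * (z1 - y1)) hN hz1 ler01 (lexx 0).
  have Sb := S_bound (2 * (z2 - y2)) hN2p hz2 ler01 (lexx 0).
  have E : W + 6 * h + (1 / N1%:R + 0 / N1%:R ^+ 2) + (1 / N2%:R + 0 / N2%:R ^+ 2) = W + c2 / N1%:R.
    by rewrite /h /c2 /D' hN2; field; apply/andP; split.
  rewrite /= -E; lra.
have B4 : forall y z : R * R, in_D y -> in_D z ->
  P (fun u => eucl (u.1 - y.1, u.2 - y.2) ^+ 4) z <=
  c4a / N1%:R * ((z.1 - y.1) ^+ 2 + (z.2 - y.2) ^+ 2) + (eucl (z.1 - y.1, z.2 - y.2) ^+ 4 + c4b / N1%:R ^+ 2).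
  move=> [y1 y2] [z1 z2] [/= hy1 hy2] [/= hz1 hz2] /=.
  set W := (z1 - y1) ^+ 2 + (z2 - y2) ^+ 2.
  rewrite eucl4 -/W /P /transition.
  apply: le_trans.
    apply: (@bern_le _ N1 N2 _ (z1, z2) (W ^+ 2 + 20 * h * W + 20 * h ^+ 2)
      (fun j => ((4 * W + 40 * h) * (z1 - y1)) * (j%:R / N1%:R - z1) + (8 * W + 20 * h) * (j%:R / N1%:R - z1) ^+ 2 + 6 * (j%:R / N1%:R - z1) ^+ 4)
      (fun j => ((4 * W + 40 * h) * (z2 - y2)) * (j%:R / N2%:R - z2) + (8 * W + 20 * h) * (j%:R / N2%:R - z2) ^+ 2 + 6 * (j%:R / N2%:R - z2) ^+ 4)).
      by split.
    move=> j1 j2 h1 h2; rewrite hA /= eucl4.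
    have g1 := grid01 R hN h1; have g2 := grid01 R hN2p h2.
    have [P1 _] := pw_main z1 z2 g1 g2 hy1 hy2 h0 hh (ltW hd0) hd1.
    exact: P1.
  have hW : 0 <= W by rewrite /W; have := sqr_ge0 (z1 - y1); have := sqr_ge0 (z2 - y2); lra.
  have hc : 0 <= 8 * W + 20 * h by lra.
  have h6 : (0 : R) <= 6 by lra.
  have Sa := S_bound ((4 * W + 40 * h) * (z1 - y1)) hN hz1 hc h6.
  have Sb := S_bound ((4 * W + 40 * h) * (z2 - y2)) hN2p hz2 hc h6.
  have E : W ^+ 2 + 20 * h * W + 20 * h ^+ 2 + ((8 * W + 20 * h) / N1%:R + 6 / N1%:R ^+ 2)
     + ((8 * W + 20 * h) / N2%:R + 6 / N2%:R ^+ 2) = c4a / N1%:R * W + (W ^+ 2 + c4b / N1%:R ^+ 2).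
    by rewrite /h /c4a /c4b /D' hN2; field; apply/andP; split.
  rewrite /= -E; lra.
have I2 : forall y : R * R, in_D y -> forall (k : nat) (z : R * R), in_D z ->
  iter k P (fun u => (u.1 - y.1) ^+ 2 + (u.2 - y.2) ^+ 2) z <=
  ((z.1 - y.1) ^+ 2 + (z.2 - y.2) ^+ 2) + k%:R * c2 / N1%:R.
  move=> y hy; elim=> [|k IH] z hz.
    by rewrite /= mul0r mul0r addr0.
  rewrite iterSr.
  apply: le_trans.
    apply: (@I_mono _ N1 N2 kappa HA k _ (fun u => 1 * ((u.1 - y.1) ^+ 2 + (u.2 - y.2) ^+ 2) + c2 / N1%:R * 1)) => //.
    by move=> u hu; rewrite mul1r mulr1; apply: B2.
  rewrite I_lin I_const mul1r mulr1.
  have := IH z hz; rewrite -[k.+1]addn1 natrD; lra.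
have I4 : forall y : R * R, in_D y -> forall k : nat,
  iter k P (fun u => eucl (u.1 - y.1, u.2 - y.2) ^+ 4) y <=
  (c4a * c2 * k%:R ^+ 2 + c4b * k%:R) / N1%:R ^+ 2.
  move=> y hy; elim=> [|k IH].
    by rewrite /= !subrr eucl4 !expr0n /= !mulr0 !addr0 expr0n /= mul0r.
  rewrite iterSr.
  apply: le_trans.
    apply: (@I_mono _ N1 N2 kappa HA k _ (fun u => c4a / N1%:R * ((u.1 - y.1) ^+ 2 + (u.2 - y.2) ^+ 2) + 1 * (eucl (u.1 - y.1, u.2 - y.2) ^+ 4 + c4b / N1%:R ^+ 2))) => //.
    by move=> u hu; rewrite mul1r; apply: B4.
  rewrite I_lin mul1r.
  rewrite (@I_ext _ N1 N2 kappa k (fun u => eucl (u.1 - y.1, u.2 - y.2) ^+ 4 + c4b / N1%:R ^+ 2) (fun u => 1 * eucl (u.1 - y.1, u.2 - y.2) ^+ 4 + c4b / N1%:R ^+ 2 * 1)); last first.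
    by move=> u; rewrite mul1r mulr1.
  rewrite I_lin I_const mul1r mulr1.
  have J := I2 y hy k y hy.
  rewrite !subrr expr0n /= addr0 add0r in J.
  have hkk : (0 : R) <= k%:R by apply: ler0n.
  have hcc : 0 <= c4a * c2 by apply: mulr_ge0.
  have J' : c4a / N1%:R * (iter k P (fun u => (u.1 - y.1) ^+ 2 + (u.2 - y.2) ^+ 2) y) <= c4a / N1%:R * (k%:R * c2 / N1%:R).
    by apply: ler_wpM2l => //; apply: divr_ge0 => //; apply: ler0n.
  have E1 : c4a / N1%:R * (k%:R * c2 / N1%:R) = (c4a * c2 * k%:R) / N1%:R ^+ 2 by field.
  rewrite E1 in J'.
  apply: le_trans (lerD J' (lerD IH (lexx _))) _.
  rewrite -!mulrDl -[k.+1]addn1 natrD; apply: ler_wpM2r.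
    by rewrite invr_ge0; apply: exprn_ge0; apply: ler0n.
  nra.
rewrite /fourth_moment_incr /transition_iter -/P.
apply: le_trans.
  apply: (@I_mono _ N1 N2 kappa HA m _ (fun _ => (c4a * c2 + c4b) * (n - m)%:R ^+ 2 / N1%:R ^+ 2)) => //.
  move=> y hy; apply: le_trans (I4 y hy (n - m)%N) _.
  rewrite -mulrA; apply: ler_wpM2r.
    by rewrite invr_ge0; apply: exprn_ge0; apply: ler0n.
  have hK : (1 : R) <= (n - m)%:R by rewrite ler1n subn_gt0.
  have hKK : (n - m)%:R <= (n - m)%:R ^+ 2 :> R by nra.
  have := ler_wpM2l hc4b hKK; lra.
by rewrite I_const.
Qed.
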